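(* Let $P$ be the uniform distribution on $[0,1]$ and $\beta=\{\frac14,\frac12\}$. The conditional optimal set of two-points for $P$ with respect to $\beta$ is $\beta$, and $V_2=\frac{37}{768}$ ($\approx0.0481771$).
   Context: For a Borel probability measure $P$ on $\mathbb{R}$ and finite $\beta$ with $\mathrm{card}(\beta)=r$, for $n\ge r$, $V_n=\inf\{\int\min_{a\in\alpha\cup\beta}(x-a)^2dP(x):\mathrm{card}(\alpha)\le n-r\}$; a set $\alpha\cup\beta$ attaining the infimum, with each point of $\beta$ having a Voronoi region of positive $P$-measure, is a conditional optimal set of $n$-points with respect to $\beta$. *)

(* Defs.v *)
From HB Require Import structures.
From mathcomp Require Import all_boot all_order all_algebra finmap.
From mathcomp Require Import all_classical all_reals all_analysis.
Set Implicit Arguments. Unset Strict Implicit. Unset Printing Implicit Defensive.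
Import Order.TTheory GRing.Theory Num.Theory.
Local Open Scope classical_set_scope.
Local Open Scope ring_scope.

Section CondQuant.
Variable R : realType.
Variable P : {measure set (measurableTypeR R) -> \bar R}.

Definition distortion (S : {fset R}) : \bar R :=
  (\int[P]_x (\big[Order.min/+oo%E]_(a <- S) ((x - a) ^+ 2)%:E))%E.

Definition condV (beta : {fset R}) (n : nat) : \bar R :=
  ereal_inf [set distortion (alpha `|` beta)%fset |
              alpha in [set alpha : {fset R} | (#|` alpha| <= n - #|` beta|)%N]].

Definition voronoi (S : {fset R}) (a : R) : set R :=
  [set x | forall b, b \in S -> `|x - a| <= `|x - b|].

Definition cond_optimal_set (beta : {fset R}) (n : nat) (gamma : {fset R}) : Prop :=
  (#|` beta| <= n)%N /\
  exists alpha : {fset R},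
    [/\ (#|` alpha| <= n - #|` beta|)%N,
        gamma = (alpha `|` beta)%fset,
        distortion gamma = condV beta n &
        forall b, b \in beta -> (0 < P (voronoi gamma b))%E].

End CondQuant.

Definition unif01 (R : realType) : {measure set (measurableTypeR R) -> \bar R} := uniform_prob (@ltr01 R).

(* Main.v *)
Set Warnings "-all".
Require Import Defs.
From HB Require Import structures.
From mathcomp Require Import all_boot all_order all_algebra finmap.
From mathcomp Require Import all_classical all_reals all_analysis.
From mathcomp Require Import lra ring.
Import Order.TTheory GRing.Theory Num.Theory numFieldNormedType.Exports.
Local Open Scope ring_scope.

Module Aux.
Local Open Scope classical_set_scope.
Section S.
Variable R : realType.

Lemma dF' (c : R) x : (fun y : R => (y - c)^+3 / 3%:R)^`()%classic x = (x - c)^+2.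
Proof.
have e : (fun y : R => (y - c)^+3) = ((fun y : R => y - c) ^+ 3)%R.
  by apply/funext => y; rewrite exprfctE.
have h : is_derive x 1 ((fun y : R => y - c) ^+ 3) ((3%:R * (x - c) ^+ 2) *: 1).
  apply: is_deriveX.
  have -> : (fun y : R => y - c) = (id - cst c)%R by [].
  have := (@is_deriveB R R^o R^o id (cst c) x 1 1 0 (is_derive_id _ _) (is_derive_cst _ _ _)).
  by rewrite subr0.
have d : derivable (fun y : R => (y - c)^+3) x 1.
  by rewrite e; apply: ex_derive.
rewrite (derive1Mr _ d).
rewrite derive1E e derive_val /= scaler1 mulrC mulrA mulVf ?mul1r //.
Qed.

Lemma dF (c : R) x : derivable (fun y : R => (y - c)^+3 / 3%:R) x 1.
Proof. by apply: derivableM. Qed.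

Lemma cF (c : R) : continuous (fun y : R => (y - c)^+3 / 3%:R).
Proof.
move=> x; apply: differentiable_continuous.
have := dF c x.
move/derivable1_diffP.
exact.
Qed.

Lemma cf (c : R) : continuous (fun y : R => (y - c)^+2).
Proof.
move=> x; apply: differentiable_continuous.
have : derivable (fun y : R => (y - c)^+2 / 1) x 1 by apply: derivableM.
under eq_fun do rewrite divr1.
move/derivable1_diffP; exact.
Qed.

Local Notation mu := (@lebesgue_measure R).

Lemma int_sq (c a b : R) : a < b ->
  (\int[mu]_(x in `[a,b]) ((x-c)^+2)%:E = (((b-c)^+3 - (a-c)^+3)/3%:R)%:E)%E.
Proof.
move=> ab.
rewrite (@continuous_FTC2 _ _ (fun y => (y - c)^+3 / 3%:R))//=.
- by rewrite -EFinB mulrBl.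
- apply: continuous_in_subspaceT => x _; exact: cf.
- split.
  + by move=> x _; exact: dF.
  + exact: cvg_at_right_filter (cF c a).
  + exact: cvg_at_left_filter (cF c b).
- by move=> x _; rewrite dF'.
Qed.

Definition q : R := (4%:R)^-1.
Definition h : R := (2%:R)^-1.
Definition g (x : R) : R := Num.min ((x - q)^+2) ((x - h)^+2).

Lemma g1 x : x <= 3%:R/8%:R -> g x = (x - q)^+2.
Proof. move=> H; rewrite /g min_l // /q /h; lra. Qed.

Lemma g2 x : 3%:R/8%:R <= x -> g x = (x - h)^+2.
Proof. move=> H; rewrite /g min_r // /q /h; lra. Qed.

Lemma g_ge0 x : 0 <= g x.
Proof. by rewrite /g le_min !sqr_ge0. Qed.

Lemma g_cont : continuous g.
Proof.
move=> x; apply: (@continuous_min R R (fun y => (y - q)^+2) (fun y => (y - h)^+2)); exact: cf.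
Qed.

Lemma g_meas : measurable_fun setT g.
Proof. exact: measurable_realfun.continuous_measurable_fun g_cont. Qed.

Lemma normle (a b : R) : (`|a| <= `|b|) = (a^+2 <= b^+2).
Proof.
by rewrite -ler_sqr ?nnegrE ?normr_ge0 // !real_normK ?num_real.
Qed.

Lemma qh : q != h.
Proof. apply/eqP; rewrite /q /h; lra. Qed.

Lemma bigmin x : (\big[Order.min/+oo%E]_(a <- [fset q; h]%fset) ((x - a)^+2)%:E = (g x)%:E)%E.
Proof.
rewrite big_fsetU1 /= ?big_seq_fset1 ?inE ?qh //.
by rewrite /g EFin_min.
Qed.

Lemma dist : distortion (unif01 R) [fset q; h]%fset = (37%:R/768%:R)%:E.
Proof.
rewrite /distortion.
under eq_integral => x _ do rewrite bigmin.
rewrite /unif01 integral_uniform /=; last 2 first.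
- by apply/measurable_realfun.measurable_EFinP; exact: g_meas.
- by move=> x; rewrite lee_fin g_ge0.
rewrite subr0 invr1 mul1e.
have e0 : (0 : R) < 3%:R/8%:R by lra.
have e1 : (3%:R/8%:R : R) < 1 by lra.
rewrite (@itv_bndbnd_setU _ _ _ (BRight (3%:R/8%:R))) ?bnd_simp ?ltW //.
rewrite ge0_integral_setU //; first last.
- rewrite disj_set2E; apply/eqP/seteqP; split => x //=.
  by rewrite !in_itv /= => -[/andP[_ ?] /andP[? _]]; lra.
- by move=> x _; rewrite lee_fin g_ge0.
- apply/measurable_realfun.measurable_EFinP.
  exact: measurable_funS g_meas.
rewrite (@eq_integral _ _ _ (@lebesgue_measure R) `[0, 3%:R/8%:R] (fun x : R => ((x - q)^+2)%:E)); last first.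
  by move=> x; rewrite inE /= in_itv /= => /andP[_ ?]; rewrite g1.
rewrite (@eq_integral _ _ _ (@lebesgue_measure R) `]3%:R/8%:R, 1] (fun x : R => ((x - h)^+2)%:E)); last first.
  by move=> x; rewrite inE /= in_itv /= => /andP[? _]; rewrite g2 // ltW.
rewrite integral_itv_obnd_cbnd; last first.
  apply/measurable_realfun.measurable_EFinP.
  apply: measurable_funS (measurable_realfun.continuous_measurable_fun (cf h)) => //.
rewrite !int_sq // -EFinD; congr (_%:E).
rewrite /q /h.
by field.
Qed.

Lemma vor_q : voronoi [fset q; h]%fset q = `]-oo, 3%:R/8%:R].
Proof.
rewrite set_itvNyc; apply/seteqP; split => x /=.
- move=> H; have := H h; rewrite !inE eqxx orbT => /(_ isT).
  rewrite normle /q /h => H'; lra.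
- move=> H b; rewrite !inE => /orP[]/eqP->; rewrite normle ?lexx //.
  move: H; rewrite /q /h => H; lra.
Qed.

Lemma vor_h : voronoi [fset q; h]%fset h = `[3%:R/8%:R, +oo[.
Proof.
rewrite set_itvcy; apply/seteqP; split => x /=.
- move=> H; have := H q; rewrite !inE eqxx /= => /(_ isT).
  rewrite normle /q /h => H'; lra.
- move=> H b; rewrite !inE => /orP[]/eqP->; rewrite normle ?lexx //.
  move: H; rewrite /q /h => H; lra.
Qed.

Lemma P_pos (U : set R) (a b : R) : U `&` `[0, 1] = `[a, b] -> 0 <= a -> a < b -> b <= 1 ->
  (0 < unif01 R U)%E.
Proof.
move=> HU a0 ab b1.
rewrite /unif01 /= /uniform_prob integral_uniform_pdf HU.
rewrite (eq_integral (fun _ => 1%:E)); last first.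
  move=> x; rewrite inE /= in_itv /= => /andP[? ?]; rewrite /uniform_pdf ifT ?subr0 ?invr1 //.
  apply/andP; split; lra.
rewrite integral_cst // mul1e; have := lebesgue_measure_itv `[a, b]%R; rewrite /= lte_fin ab => ->; rewrite -EFinD lte_fin; lra.
Qed.
End S.
End Aux.

Theorem proposition3p1 (R : realType) :
  let P := @unif01 R in
  let beta : {fset R} := [fset (4%:R)^-1; (2%:R)^-1]%fset in
  (forall gamma : {fset R}, cond_optimal_set P beta 2 gamma <-> gamma = beta) /\
  condV P beta 2 = ((37%:R / 768%:R : R)%:E).
Proof.
move=> P beta; rewrite {}/P {}/beta.
change ((forall gamma : {fset R}, cond_optimal_set (unif01 R) [fset Aux.q R; Aux.h R]%fset 2 gamma
   <-> gamma = [fset Aux.q R; Aux.h R]%fset) /\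
  condV (unif01 R) [fset Aux.q R; Aux.h R]%fset 2 = ((37%:R / 768%:R : R)%:E)).
set b := [fset Aux.q R; Aux.h R]%fset.
have cb : #|` b| = 2%N by rewrite /b cardfsU1 cardfs1 inE (negbTE (Aux.qh R)).
have condE : condV (unif01 R) b 2 = distortion (unif01 R) b.
  rewrite /condV cb subnn -[RHS]ereal_inf1; congr ereal_inf.
  apply/seteqP; split => y /=.
  - case=> alpha Ha <-.
    have -> : alpha = fset0 by apply: cardfs0_eq; apply/eqP; rewrite -leqn0.
    by rewrite fset0U.
  - move=> ->; exists fset0; last by rewrite fset0U.
    by rewrite (@cardfs0 R).
split; last by rewrite condE Aux.dist.
move=> gamma; split.
- case=> _ [alpha [Ha -> Hd Hp]].
  rewrite cb subnn in Ha.
  have -> : alpha = fset0 by apply: cardfs0_eq; apply/eqP; rewrite -leqn0.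
  by rewrite fset0U.
- move=> ->; split; first by rewrite cb.
  exists fset0; split.
  + by rewrite cardfs0.
  + by rewrite fset0U.
  + by rewrite condE.
  + move=> y; rewrite !inE => /orP[]/eqP->.
      rewrite Aux.vor_q; apply: (@Aux.P_pos R _ 0 (3%:R/8%:R)); [|lra|lra|lra].
      rewrite set_itvNyc !set_itvcc; apply/seteqP; split => x /=.
      - by move=> [H1 /andP[H2 H3]]; apply/andP; split; lra.
      - by move/andP=> [H1 H2]; split; [lra | apply/andP; split; lra].
    * rewrite Aux.vor_h; apply: (@Aux.P_pos R _ (3%:R/8%:R) 1); [|lra|lra|lra].
      rewrite set_itvcy !set_itvcc; apply/seteqP; split => x /=.
      - by move=> [H1 /andP[H2 H3]]; apply/andP; split; lra.
      - by move/andP=> [H1 H2]; split; [lra | apply/andP; split; lra].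
Qed.
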